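(* Let $c>0$ and let $r\geq1$ be an integer. If $N\geq 1$ and $r-1\leq c\log N$, then $$ \sum_{a\leq N^r}(\tau_r'(a))^2\leq\left(\frac{(1+c)^{r-1}}{(r-1)!}\,N(\log N)^{r-1}\right)^r. $$
   Context: $a$ runs over positive integers. $\tau_r'(a)$ is the number of ways to write $a$ as an ordered product of $r$ positive integers each of which does not exceed $N$. *)

(* Defs.v *)
From Stdlib Require Import Reals.
From mathcomp Require Import all_boot.

(* tau' N r a : number of ordered r-tuples (x_1,...,x_r) of positive integers
   with each x_i <= N and x_1 * ... * x_r = a.
   A tuple is encoded as f : 'I_r -> 'I_N, representing x_i = (f i) + 1. *)
Definition tau' (N r a : nat) : nat :=
  #|[set f : {ffun 'I_r -> 'I_N} | \prod_(i < r) (f i).+1 == a]|.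

Definition tau'_sq_sum (N r : nat) : nat :=
  \sum_(1 <= a < (N ^ r).+1) (tau' N r a) ^ 2.

(* Main.v *)
Require Import Defs.
From Stdlib Require Import Reals Lra Psatz.
From mathcomp Require Import all_boot.
Lemma cop_div_gcd a b : 0 < gcdn a b -> coprime (a %/ gcdn a b) (b %/ gcdn a b).
Proof.
move=> g0; rewrite /coprime -(eqn_pmul2l g0) muln_gcdr.
by rewrite ![gcdn a b * _]mulnC !divnK ?dvdn_gcdl ?dvdn_gcdr // mul1n.
Qed.

Lemma dvd_prod_ord n (F : 'I_n -> nat) j : F j %| \prod_(i < n) F i.
Proof. by rewrite (bigD1 j) //= dvdn_mulr. Qed.

Lemma split_div (n : nat) : forall (a : nat) (y : 'I_n -> nat),
  (forall j, 0 < y j) -> a %| \prod_(j < n) y j ->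
  exists w : 'I_n -> nat, (forall j, w j %| y j) /\ \prod_(j < n) w j = a.
Proof.
elim: n => [|n IH] a y ypos ha.
  exists (fun _ => 1); split => [[]//|].
  by rewrite big_ord0; move: ha; rewrite big_ord0 dvdn1 => /eqP.
rewrite big_ord_recl in ha.
set g := gcdn a (y ord0).
have g0 : 0 < g by rewrite gcdn_gt0 ypos orbT.
have ha' : a %/ g %| \prod_(i < n) y (lift ord0 i).
  have cop : coprime (a %/ g) (y ord0 %/ g) by rewrite cop_div_gcd.
  rewrite -(Gauss_dvdr _ cop).
  by rewrite -(dvdn_pmul2l g0) mulnA !(mulnC g) /g !divnK ?dvdn_gcdl ?dvdn_gcdr.
have [w' [hw1 hw2]] := IH (a %/ g) (fun i => y (lift ord0 i)) (fun j => ypos _) ha'.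
exists (fun j => if unlift ord0 j is Some j' then w' j' else g); split.
  move=> j; case: unliftP => [j' ->|->]; [exact: hw1| exact: dvdn_gcdr].
rewrite big_ord_recl unlift_none.
under eq_bigr => i _ do rewrite liftK.
by rewrite hw2 mulnC /g divnK ?dvdn_gcdl.
Qed.

Lemma matrix_exists (m n : nat) : forall (x : 'I_m -> nat) (y : 'I_n -> nat),
  (forall i, 0 < x i) -> (forall j, 0 < y j) ->
  \prod_(i < m) x i = \prod_(j < n) y j ->
  exists z : 'I_m -> 'I_n -> nat,
    (forall i, \prod_(j < n) z i j = x i) /\ (forall j, \prod_(i < m) z i j = y j).
Proof.
elim: m => [|m IH] x y xpos ypos hxy.
  exists (fun _ _ => 0); split => [[]//|j].
  rewrite big_ord0; apply/esym/eqP; rewrite -dvdn1.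
  by move: hxy; rewrite big_ord0 => ->; rewrite dvd_prod_ord.
have ha : x ord0 %| \prod_(j < n) y j by rewrite -hxy big_ord_recl dvdn_mulr.
have [w [hw1 hw2]] := @split_div n (x ord0) y ypos ha.
pose y' j := y j %/ w j.
have hy' : \prod_(i < m) x (lift ord0 i) = \prod_(j < n) y' j.
  apply/eqP; rewrite -(eqn_pmul2l (xpos ord0)).
  rewrite -big_ord_recl hxy -hw2 -big_split /=.
  by apply/eqP/eq_bigr => j _; rewrite /y' mulnC divnK.
have y'pos j : 0 < y' j.
  have wpos : 0 < w j.
    rewrite lt0n; apply/negP => /eqP w0.
    by move: (hw1 j) (ypos j); rewrite w0 dvd0n => /eqP ->.
  by rewrite /y' divn_gt0 // dvdn_leq.
have [z' [hz1 hz2]] := IH (fun i => x (lift ord0 i)) y' (fun i => xpos _) y'pos hy'.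
exists (fun i j => if unlift ord0 i is Some i' then z' i' j else w j); split.
  move=> i; case: unliftP => [i' ->|->] //; exact: hz1.
move=> j; rewrite big_ord_recl unlift_none.
under eq_bigr => i _ do rewrite liftK.
by rewrite hz2 /y' mulnC divnK.
Qed.

Definition prodf {N k : nat} (f : {ffun 'I_k -> 'I_N}) := \prod_(i < k) (f i).+1.

Lemma card_set_sum (T : finType) (P : pred T) : #|[set x | P x]| = \sum_x (P x : nat).
Proof.
rewrite cardsE -sum1_card big_mkcond /=; apply: eq_bigr => x _; by rewrite unfold_in; case: (P x).
Qed.

Lemma sum_eq_le1 (s : seq nat) (x : nat) : uniq s -> \sum_(a <- s) (x == a : nat) <= 1.
Proof.
move=> us.
rewrite (eq_bigr (fun a => if x == a then 1 else 0)); last by move=> a _; case: (x == a).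
rewrite -big_mkcond sum1_count.
rewrite (eq_count (a2 := pred1 x)); last by move=> a /=; rewrite eq_sym.
by rewrite count_uniq_mem // leq_b1.
Qed.

Lemma sq_sum_le_pairs (N r : nat) :
  tau'_sq_sum N r <= #|[set p : {ffun 'I_r -> 'I_N} * {ffun 'I_r -> 'I_N} |
                        prodf p.1 == prodf p.2]|.
Proof.
rewrite /tau'_sq_sum card_set_sum -(pair_bigA _ (fun f g => (prodf f == prodf g : nat))) /=.
rewrite (eq_bigr (fun a => \sum_(f : {ffun 'I_r -> 'I_N}) \sum_(g : {ffun 'I_r -> 'I_N})
     ((prodf f == a) * (prodf g == a)))); last first.
  move=> a _; rewrite /tau' card_set_sum -mulnn big_distrl /=.
  by apply: eq_bigr => f _; rewrite big_distrr.
rewrite exchange_big /=; apply: leq_sum => f _.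
rewrite exchange_big /=; apply: leq_sum => g _.
have [e|ne] := eqVneq (prodf f) (prodf g).
  rewrite e.
  rewrite (eq_bigr (fun a => (prodf g == a : nat))); last by move=> a _; rewrite mulnb andbb.
  by apply: sum_eq_le1; apply: iota_uniq.
rewrite big1 // => a _.
by case: eqP => // fa; case: eqP => // ga; move: ne; rewrite fa ga eqxx.
Qed.

Definition rowset (M r : nat) := [set g : {ffun 'I_r -> 'I_M.+1} | prodf g <= M.+1].

Definition psi (M r : nat) (Z : {ffun 'I_r -> {ffun 'I_r -> 'I_M.+1}}) :
  {ffun 'I_r -> 'I_M.+1} * {ffun 'I_r -> 'I_M.+1} :=
  ([ffun i => inord (\prod_(j < r) (Z i j).+1).-1],
   [ffun j => inord (\prod_(i < r) (Z i j).+1).-1]).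

Lemma pairs_le_rows (M r : nat) :
  #|[set p : {ffun 'I_r -> 'I_M.+1} * {ffun 'I_r -> 'I_M.+1} | prodf p.1 == prodf p.2]|
   <= #|rowset M r| ^ r.
Proof.
have -> : #|rowset M r| ^ r = #|@ffun_on 'I_r (rowset M r)| by rewrite card_ffun_on card_ord.
apply: leq_trans (leq_imset_card (@psi M r) _).
apply: subset_leq_card; apply/subsetP => -[p1 p2]; rewrite inE /= => /eqP hp.
pose x i := (p1 i).+1; pose y j := (p2 j).+1.
have [z [hz1 hz2]] := @matrix_exists r r x y (fun _ => erefl) (fun _ => erefl) hp.
have zpos i j : 0 < z i j by apply: (@dvdn_gt0 _ (x i)) => //; rewrite -hz1 dvd_prod_ord.
have zle i j : z i j <= M.+1.
  apply: leq_trans (ltn_ord (p1 i)).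
  by apply: dvdn_leq => //; rewrite -/(x i) -hz1 dvd_prod_ord.
pose Z := [ffun i => [ffun j => (inord (z i j).-1 : 'I_M.+1)]].
have hZ i j : (Z i j).+1 = z i j.
  by rewrite !ffunE inordK ?prednK // -ltnS prednK.
apply/imsetP; exists Z.
  apply/ffun_onP => i; rewrite inE /prodf.
  under eq_bigr => j _ do rewrite hZ.
  by rewrite hz1 ltn_ord.
rewrite /psi; congr pair; apply/ffunP => i; rewrite ffunE.
  under eq_bigr => j _ do rewrite hZ.
  by rewrite hz1 /= inord_val.
under eq_bigr => j _ do rewrite hZ.
by rewrite hz2 /= inord_val.
Qed.

Definition Cnt (k N n : nat) := \sum_(g : {ffun 'I_k -> 'I_N}) (prodf g <= n : nat).

Definition consf {k N} (t : 'I_N) (g : {ffun 'I_k -> 'I_N}) : {ffun 'I_k.+1 -> 'I_N} :=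
  [ffun i => if unlift ord0 i is Some j then g j else t].

Lemma prodf_consf k N t (g : {ffun 'I_k -> 'I_N}) : prodf (consf t g) = t.+1 * prodf g.
Proof.
rewrite /prodf big_ord_recl /consf ffunE unlift_none; congr (_ * _).
by apply: eq_bigr => i _; rewrite ffunE liftK.
Qed.

Lemma sum_consf k N (F : {ffun 'I_k.+1 -> 'I_N} -> nat) :
  \sum_f F f = \sum_(t < N) \sum_(g : {ffun 'I_k -> 'I_N}) F (consf t g).
Proof.
rewrite pair_bigA /=.
have bij : bijective (fun p : 'I_N * {ffun 'I_k -> 'I_N} => consf p.1 p.2).
  exists (fun f : {ffun 'I_k.+1 -> 'I_N} => (f ord0, [ffun j => f (lift ord0 j)])).
    move=> [t g] /=; rewrite /consf ffunE unlift_none; congr pair.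
    by apply/ffunP => j; rewrite !ffunE liftK.
  move=> f; apply/ffunP => i; rewrite /consf ffunE.
  by case: unliftP => [j ->|->] //; rewrite ffunE.
by rewrite (reindex _ (onW_bij _ bij)).
Qed.

Lemma Cnt_rec k N n : Cnt k.+1 N n = \sum_(t < N) Cnt k N (n %/ t.+1).
Proof.
rewrite /Cnt sum_consf; apply: eq_bigr => t _; apply: eq_bigr => g _.
by rewrite prodf_consf leq_divRL // mulnC.
Qed.

Lemma Cnt0 k N : Cnt k N 0 = 0.
Proof.
rewrite /Cnt big1 // => g _.
have : (0 < prodf g)%N by apply: prodn_gt0.
by case: (prodf g).
Qed.

Lemma Cnt_zero N n : Cnt 0 N n = (0 < n).
Proof.
rewrite /Cnt (eq_bigr (fun _ => (0 < n : nat))); last by move=> g _; rewrite /prodf big_ord0.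
by rewrite sum_nat_const card_ffun (card_ord 0) expn0 mul1n.
Qed.

Lemma card_rowset M r : #|rowset M r| = Cnt r M.+1 M.+1.
Proof. by rewrite /rowset card_set_sum. Qed.
Local Open Scope R_scope.

Lemma pow_ineq (k : nat) (U V : R) : 0 <= V -> V <= U ->
  V ^ k.+1 + INR k.+1 * (U - V) * V ^ k <= U ^ k.+1.
Proof.
move=> V0 VU; elim: k => [|k IH].
  rewrite /= ; lra.
have a0 : 0 <= V ^ k by apply: pow_le.
have eV1 : V ^ k.+1 = V * V ^ k by [].
have eV2 : V ^ k.+2 = V * (V * V ^ k) by [].
have eU2 : U ^ k.+2 = U * U ^ k.+1 by [].
have eI : INR k.+2 = INR k + 1 + 1 by rewrite !S_INR.
have eI1 : INR k.+1 = INR k + 1 by rewrite !S_INR.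
rewrite eV2 eU2 eI eV1; rewrite eV1 eI1 in IH.
move: IH a0; set a := V ^ k; set q := U ^ k.+1 => Q a0.
have k0 : 0 <= INR k by apply: pos_INR.
have h1 : 0 <= U * (q - (V * a + (INR k + 1) * (U - V) * a))
  by apply: Rmult_le_pos; lra.
have h2 : 0 <= (INR k + 1) * ((U - V) * (U - V) * a).
  apply: Rmult_le_pos; first lra. apply: Rmult_le_pos => //; nra.
nra.
Qed.

Lemma ln_gap (d : nat) : (2 <= d)%N -> / INR d <= ln (INR d) - ln (INR d.-1).
Proof.
move=> d2.
have hd : INR d = INR d.-1 + 1 by rewrite -S_INR prednK // (leq_trans _ d2).
have p1 : 0 < INR d.-1 by apply: lt_0_INR; apply/ltP; rewrite -ltnS prednK // (leq_trans _ d2).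
have p2 : 0 < INR d by lra.
have h := exp_ineq1_le (ln (INR d.-1 / INR d)).
rewrite exp_ln in h; last by apply: Rdiv_lt_0_compat.
rewrite /Rdiv ln_mult ?ln_Rinv // in h; last by apply: Rinv_0_lt_compat.
have e : INR d.-1 * / INR d = 1 - / INR d by rewrite hd; field; lra.
rewrite e in h; lra.
Qed.

Lemma ln_le' x y : 0 < x -> x <= y -> ln x <= ln y.
Proof.
move=> x0 [xy|->]; last lra.
by left; apply: ln_increasing.
Qed.

Definition fk (k : nat) (u : R) := (u + INR k) ^ k / INR k`!.
Definition Gk (k : nat) (u : R) := (u + INR k) ^ k.+1 / INR k.+1`!.

Lemma INR_muln a b : INR (a * b)%N = INR a * INR b.
Proof. by rewrite mulnE mult_INR. Qed.

Lemma fact_pos k : 0 < INR k`!.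
Proof. by apply: lt_0_INR; apply/ltP; apply: fact_gt0. Qed.

Lemma factS_R k : INR k.+1`! = INR k.+1 * INR k`!.
Proof. by rewrite factS INR_muln. Qed.

Lemma step_ineq (k d n : nat) : (2 <= d)%N -> (d <= n)%N ->
  / INR d * fk k (ln (INR n) - ln (INR d)) <=
  Gk k (ln (INR n) - ln (INR d.-1)) - Gk k (ln (INR n) - ln (INR d)).
Proof.
move=> d2 dn.
have pd1 : 0 < INR d.-1 by apply: lt_0_INR; apply/ltP; rewrite -ltnS prednK // (leq_trans _ d2).
have pd : 0 < INR d by apply: lt_0_INR; apply/ltP; rewrite (leq_trans _ d2).
have lnd : ln (INR d) <= ln (INR n) by apply: ln_le' => //; apply: le_INR; apply/leP.
have lnd1 : ln (INR d.-1) <= ln (INR d).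
  by apply: ln_le' => //; apply: le_INR; apply/leP; apply: leq_pred.
have gap := ln_gap _ d2.
have k0 : 0 <= INR k by apply: pos_INR.
rewrite /fk /Gk factS_R.
set V := ln (INR n) - ln (INR d) + INR k.
set U := ln (INR n) - ln (INR d.-1) + INR k.
have V0 : 0 <= V by rewrite /V; lra.
have VU : V <= U by rewrite /U /V; lra.
have UV : / INR d <= U - V by rewrite /U /V; lra.
have F0 := fact_pos k.
set F := INR k`! in F0 *.
have K0 : 0 < INR k.+1 by apply: lt_0_INR; apply/ltP.
set K1 := INR k.+1 in K0 *.
have a0 : 0 <= V ^ k / F by apply: Rmult_le_pos; [apply: pow_le | left; apply: Rinv_0_lt_compat].
apply: Rle_trans (_ : (U - V) * (V ^ k / F) <= _).
  by apply: Rmult_le_compat_r.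
have h := pow_ineq k _ _ V0 VU.
rewrite -/K1 in h.
have e1 : (U - V) * (V ^ k / F) = (K1 * (U - V) * V ^ k) * / (K1 * F) by field; lra.
have e2 : U ^ k.+1 / (K1 * F) - V ^ k.+1 / (K1 * F) = (U ^ k.+1 - V ^ k.+1) * / (K1 * F)
  by field; lra.
rewrite e1 e2; apply: Rmult_le_compat_r; last lra.
by left; apply: Rinv_0_lt_compat; apply: Rmult_lt_0_compat.
Qed.

Fixpoint rsum (f : nat -> R) (m : nat) : R :=
  match m with O => 0 | S m' => rsum f m' + f m' end.

Lemma rsum_le (f g : nat -> R) m : (forall t, (t < m)%N -> f t <= g t) -> rsum f m <= rsum g m.
Proof.
elim: m => [|m IH] h /=; first lra.
have := h m (ltnSn m); have := IH (fun t ht => h t (ltnW ht)); lra.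
Qed.

Lemma rsum_trunc (f : nat -> R) m M : (m <= M)%N ->
  (forall t, (m <= t)%N -> (t < M)%N -> f t = 0) -> rsum f M = rsum f m.
Proof.
elim: M => [|M IH] hm h; first by move: hm; rewrite leqn0 => /eqP ->.
rewrite leq_eqVlt in hm; case/orP: hm => [/eqP -> //|hm].
have hm' : (m <= M)%N by rewrite -ltnS.
rewrite /= IH //; last by move=> t ht tM; apply: h => //; apply: ltnW.
by rewrite h // Rplus_0_r.
Qed.

Lemma rsum_scal (c : R) f m : rsum (fun t => c * f t) m = c * rsum f m.
Proof. by elim: m => [|m IH] /=; [ring | rewrite IH; ring]. Qed.

Lemma rsum_const1 m : rsum (fun _ => 1) m = INR m.
Proof. by elim: m => [|m IH] //; rewrite [rsum _ _]/= IH S_INR. Qed.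

Lemma INR_sum (a : nat -> nat) m : INR (\sum_(t < m) a t) = rsum (fun t => INR (a t)) m.
Proof.
elim: m => [|m IH]; first by rewrite big_ord0.
by rewrite big_ord_recr /= addnE plus_INR IH.
Qed.

Definition term (k n : nat) (t : nat) := / INR t.+1 * fk k (ln (INR n) - ln (INR t.+1)).

Lemma telescope k n m : (m.+1 <= n)%N ->
  rsum (term k n) m.+1 <= fk k (ln (INR n)) + Gk k (ln (INR n)) - Gk k (ln (INR n) - ln (INR m.+1)).
Proof.
elim: m => [|m IH] hm.
  rewrite [rsum _ _]/= /term [INR 1]/= ln_1 Rminus_0_r Rinv_1; lra.
have := IH (ltnW hm).
have := @step_ineq k m.+2 n isT hm.
have e : rsum (term k n) m.+2 = rsum (term k n) m.+1 + term k n m.+1 by [].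
have e2 : term k n m.+1 = / INR m.+2 * fk k (ln (INR n) - ln (INR m.+2)) by [].
rewrite e e2 [_.-1]/=; lra.
Qed.

Lemma Gk_nonneg k u : 0 <= u -> 0 <= Gk k u.
Proof.
move=> u0; have k0 := pos_INR k.
rewrite /Gk; apply: Rmult_le_pos; first by apply: pow_le; lra.
by left; apply: Rinv_0_lt_compat; apply: fact_pos.
Qed.

Lemma sum_terms k n : (1 <= n)%N -> rsum (term k n) n <= fk k.+1 (ln (INR n)).
Proof.
case: n => [//|n] _.
apply: Rle_trans (@telescope k n.+1 n (leqnn _)) _.
rewrite Rminus_diag.
have L0 : 0 <= ln (INR n.+1) by rewrite -ln_1; apply: ln_le'; [lra| apply: (le_INR 1)]; apply/leP.
have := Gk_nonneg k _ (Rle_refl 0).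
have k0 := pos_INR k.
rewrite /fk /Gk !factS_R S_INR.
set U := ln (INR n.+1) + INR k.
have U0 : 0 <= U by rewrite /U; lra.
have h := pow_ineq k (U + 1) U U0; rewrite S_INR in h.
have F0 := fact_pos k.
set F := INR k`! in F0 *.
have e1 : ln (INR n.+1) + (INR k + 1) = U + 1 by rewrite /U; ring.
rewrite e1.
have K0 : 0 < INR k + 1 by lra.
have e2 : U ^ k / F + U ^ k.+1 / ((INR k + 1) * F) =
   ((INR k + 1) * U ^ k + U ^ k.+1) * / ((INR k + 1) * F) by field; lra.
have e3 : (U + 1) ^ k.+1 / ((INR k + 1) * F) = (U + 1) ^ k.+1 * / ((INR k + 1) * F) by [].
move=> g0.
apply: Rle_trans (_ : U ^ k / F + U ^ k.+1 / ((INR k + 1) * F) <= _); first lra.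
rewrite e2 e3; apply: Rmult_le_compat_r.
  by left; apply: Rinv_0_lt_compat; apply: Rmult_lt_0_compat.
have h' := h ltac:(lra).
replace (U + 1 - U) with 1 in h' by ring. lra.
Qed.

Lemma fk0 u : fk 0 u = 1.
Proof. rewrite /fk /=; field. Qed.

Lemma fk_mono k u v : 0 <= u -> u <= v -> fk k u <= fk k v.
Proof.
move=> u0 uv; have k0 := pos_INR k; rewrite /fk /Rdiv.
apply: Rmult_le_compat_r; first by left; apply: Rinv_0_lt_compat; apply: fact_pos.
apply: pow_incr; lra.
Qed.

Lemma fk_nonneg k u : 0 <= u -> 0 <= fk k u.
Proof.
move=> u0; have k0 := pos_INR k; rewrite /fk /Rdiv.
apply: Rmult_le_pos; first by apply: pow_le; lra.
by left; apply: Rinv_0_lt_compat; apply: fact_pos.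
Qed.

Lemma cnt_bound M k : forall n, (1 <= n)%N -> (n <= M.+1)%N ->
  INR (Cnt k.+1 M.+1 n) <= INR n * fk k (ln (INR n)).
Proof.
elim: k => [|k IH] n n1 nN; rewrite Cnt_rec (INR_sum (fun t => Cnt _ M.+1 (n %/ t.+1))) (@rsum_trunc _ n) //; last 1 first.
- move=> t nt tN; rewrite divn_small ?Cnt0 //; by rewrite ltnS.
- rewrite fk0 Rmult_1_r -rsum_const1; apply: rsum_le => t tn.
  rewrite Cnt_zero; case: (0 < _)%N => /=; lra.
- move=> t nt tN; rewrite divn_small ?Cnt0 //; by rewrite ltnS.
apply: Rle_trans (_ : rsum (fun t => INR n * term k n t) n <= _); last first.
  rewrite rsum_scal; apply: Rmult_le_compat_l; first by apply: pos_INR.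
  exact: sum_terms.
apply: rsum_le => t tn.
set m := (n %/ t.+1)%N.
have m1 : (1 <= m)%N by rewrite /m leq_divRL // mul1n.
have mN : (m <= M.+1)%N by apply: leq_trans (leq_div _ _) nN.
apply: Rle_trans (IH m m1 mN) _.
have pm : 0 < INR m by apply: lt_0_INR; apply/ltP.
have pt : 0 < INR t.+1 by apply: lt_0_INR; apply/ltP.
have hmt : INR m * INR t.+1 <= INR n by rewrite -INR_muln; apply: le_INR; apply/leP; apply: leq_divM.
have lm0 : 0 <= ln (INR m) by rewrite -ln_1; apply: ln_le'; [lra | apply: (le_INR 1); apply/leP].
have lmt : ln (INR m) <= ln (INR n) - ln (INR t.+1).
  have := ln_le' _ _ (Rmult_lt_0_compat _ _ pm pt) hmt; rewrite ln_mult //; lra.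
rewrite /term.
have e : INR n * (/ INR t.+1 * fk k (ln (INR n) - ln (INR t.+1))) =
         (INR n / INR t.+1) * fk k (ln (INR n) - ln (INR t.+1)) by rewrite /Rdiv; ring.
rewrite e; apply: Rmult_le_compat; first lra.
- exact: fk_nonneg.
- apply/(Rmult_le_reg_r (INR t.+1)) => //; rewrite /Rdiv Rmult_assoc Rinv_l; lra.
- exact: fk_mono.
Qed.

Lemma INR_expn a r : INR (a ^ r)%N = INR a ^ r.
Proof. by elim: r => [//|r IH]; rewrite expnS INR_muln IH. Qed.

Theorem corollary2p2 (c : R) (r N : nat) :
  0 < c -> (1 <= r)%N -> (1 <= N)%N ->
  INR (r - 1)%N <= c * ln (INR N) ->
  INR (tau'_sq_sum N r) <=
     ((1 + c) ^ (r - 1)%N / INR (r - 1)`! * INR N * (ln (INR N)) ^ (r - 1)%N) ^ r.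
Proof.
case: r => [//|s]; case: N => [//|M] c0 _ _.
have -> : (s.+1 - 1)%N = s by rewrite subn1.
move=> hc.
have L0 : 0 <= ln (INR M.+1) by rewrite -ln_1; apply: ln_le'; [lra | apply: (le_INR 1); apply/leP].
apply: Rle_trans (_ : INR (#|rowset M s.+1| ^ s.+1) <= _).
  apply: le_INR; apply/leP.
  exact: leq_trans (sq_sum_le_pairs _ _) (pairs_le_rows _ _).
rewrite INR_expn card_rowset.
have c1 := cnt_bound M s M.+1 (ltn0Sn M) (leqnn _).
apply: pow_incr; split; first by apply: pos_INR.
apply: Rle_trans c1 _.
have s0 := pos_INR s.
have F0 := fact_pos s.
rewrite /fk.
have hp : (ln (INR M.+1) + INR s) ^ s <= (1 + c) ^ s * ln (INR M.+1) ^ s.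
  rewrite -Rpow_mult_distr; apply: pow_incr; split; nra.
have e : (1 + c) ^ s / INR s`! * INR M.+1 * ln (INR M.+1) ^ s =
   INR M.+1 * (((1 + c) ^ s * ln (INR M.+1) ^ s) * / INR s`!) by rewrite /Rdiv; ring.
rewrite e; apply: Rmult_le_compat_l; first by apply: pos_INR.
apply: Rmult_le_compat_r => //; by left; apply: Rinv_0_lt_compat.
Qed.
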